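(* Let $e,f\in\mathbb{N}^I$ and $d=e+f$. Then: (a) $w_{e,f}\cdot\rho-\rho=-2\rho_{f,e}$. (b) The map $\beta\mapsto -w_{f,e}\cdot\beta$ is a bijection from $\mathcal{W}_{f,e}$ onto $\mathcal{W}_{e,f}$.
   Context: Let $Q=(I,E)$ be a symmetric quiver (for all $i,j\in I$ the number of arrows $i\to j$ equals the number of arrows $j\to i$). For $d\in\mathbb{N}^I$ let $R(d)=\bigoplus_{a\in E}\mathrm{Hom}(\mathbb{C}^{d_{s(a)}},\mathbb{C}^{d_{t(a)}})$ with $G(d)=\prod_i GL(d_i)$, and let $M=\bigoplus_{i\in I,1\le j\le d_i}\mathbb{Z}\beta^i_j$ be the weight lattice of the diagonal torus. The Weyl group $\mathfrak{S}_d=\prod_{a\in I}\mathfrak{S}_{d_a}$ acts on $M$ by $w\cdot\beta^a_j=\beta^a_{w^a(j)}$ for $w=(w^a)_{a\in I}$. Positive roots are $\beta^a_i-\beta^a_j$ with $i<j$, and $\rho$ is half their sum. Let $\mathcal{W}$ be the multiset of weights of $R(d)$ (for each arrow $a:i\to j$ and $x\le d_i$, $y\le d_j$, the weight $\beta^j_y-\beta^i_x$). For $e,f\in\mathbb{N}^I$ with $e+f=d$, let $\lambda_{e,f}$ be an antidominant cocharacter of the torus of $SG(d)$ associated with the ordered partition $(e,f)$: $\langle\lambda_{e,f},\beta^a_j\rangle=x$ for $j\le e^a$ and $=y$ for $j>e^a$, with fixed reals/integers $x<y$ (normalized so that $\lambda_{e,f}$ lies in $SG(d)$); define $\lambda_{f,e}$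 similarly with the blocks of sizes $f^a$ then $e^a$. Let $\mathcal{W}_{e,f}:=\{\beta\in\mathcal{W}:\langle\lambda_{e,f},\beta\rangle<0\}$ and let $\rho_{e,f}$ be half the sum of the positive roots $\alpha$ with $\langle\lambda_{e,f},\alpha\rangle<0$ (similarly $\mathcal{W}_{f,e}$, $\rho_{f,e}$). Let $w_{e,f}=(w^a)_{a\in I}\in\mathfrak{S}_d$ with $w^a(i)=i+f^a$ for $1\le i\le e^a$ and $w^a(i)=i-e^a$ for $e^a<i\le e^a+f^a$; $w_{f,e}$ is defined with the roles of $e,f$ exchanged (so $w_{f,e}=w_{e,f}^{-1}$). *)

(* Defs.v *)
From HB Require Import structures.
From mathcomp Require Import all_boot all_order all_fingroup all_algebra.
From mathcomp Require Import zify.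
Set Implicit Arguments. Unset Strict Implicit. Unset Printing Implicit Defensive.
Import Order.TTheory GRing.Theory Num.Theory.
Local Open Scope ring_scope.

Section Weights.
Variables (I : finType) (d : I -> nat).

(** Index set of the basis beta^a_j of the weight lattice M (0-based: j < d a). *)
Definition idx : finType := {a : I & 'I_(d a)}.

(** Weights (elements of M (x) Q) : rational coordinates on the basis beta^a_j. *)
Definition wt := {ffun idx -> rat}.

Definition beta (a : I) (j : 'I_(d a)) : wt :=
  [ffun k => ((k == Tagged (fun b => 'I_(d b)) j) : nat)%:R].

(** Weyl group S_d = prod_a S_{d_a}, acting by w . beta^a_j = beta^a_{w^a(j)}. *)
Definition weyl := forall a : I, {perm 'I_(d a)}.

Definition wact (w : weyl) (m : wt) : wt :=
  [ffun k => m (Tagged (fun b => 'I_(d b)) ((w (tag k))^-1%g (tagged k)))].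

Definition pairing (l m : wt) : rat := \sum_k l k * m k.

Definition rho_sub (P : wt -> bool) : wt :=
  [ffun k => 2^-1 * (\sum_(a : I) \sum_(i : 'I_(d a))
       \sum_(j : 'I_(d a) | (i < j)%N && P (beta i - beta j)) (beta i - beta j)) k].

Definition rho : wt := rho_sub (fun _ => true).

Definition rho_lam (l : wt) : wt := rho_sub (fun al => pairing l al < 0).

Definition cochar (e : I -> nat) (x y : rat) : wt :=
  [ffun k : idx => if (tagged k < e (tag k))%N then x else y].

Definition in_SG (l : wt) : Prop := \sum_k l k = 0.

(** Multiset of weights of R(d) for a quiver with arrow set Ar, source s, target t:
    for each arrow a : i -> j and x < d_i, y < d_j, the weight beta^j_y - beta^i_x. *)
Definition weights (Ar : finType) (s t : Ar -> I) : seq wt :=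
  flatten [seq [seq beta y - beta x | x <- enum 'I_(d (s a)), y <- enum 'I_(d (t a))]
          | a <- enum Ar].

Definition weights_lam (Ar : finType) (s t : Ar -> I) (l : wt) : seq wt :=
  [seq b <- weights s t | pairing l b < 0].

End Weights.

Definition symmetric_quiver (I Ar : finType) (s t : Ar -> I) : Prop :=
  forall i j : I, #|[pred a | (s a == i) && (t a == j)]| = #|[pred a | (s a == j) && (t a == i)]|.

Definition wfun (e f i : nat) : nat := if (i < e)%N then (i + f)%N else (i - e)%N.

Lemma wfun_lt e f i : (i < e + f)%N -> (wfun e f i < e + f)%N.
Proof. rewrite /wfun; case: ifP => ? ?; lia. Qed.

Definition word (e f n : nat) (i : 'I_n) : 'I_n := insubd i (wfun e f i).

Lemma word_inj e f n (H : (e + f)%N = n) : injective (@word e f n).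
Proof.
subst n => i j; rewrite /word => /(congr1 val).
rewrite !val_insubd !wfun_lt ?ltn_ord // => Hij; apply/val_inj => /=.
have := ltn_ord i; have := ltn_ord j; move: Hij; rewrite /wfun.
by case: ifP; case: ifP; lia.
Qed.

Definition wperm (e f n : nat) (H : (e + f)%N = n) : {perm 'I_n} := perm (word_inj H).

Definition dsum (I : finType) (e f : I -> nat) : I -> nat := fun a => (e a + f a)%N.

Definition w_ef (I : finType) (e f : I -> nat) : weyl (dsum e f) :=
  fun a => wperm (erefl (e a + f a)%N).
Definition w_fe (I : finType) (e f : I -> nat) : weyl (dsum e f) :=
  fun a => wperm (addnC (f a) (e a)).

(* Main.v *)
Require Import Defs.
From HB Require Import structures.
From mathcomp Require Import all_boot all_order all_fingroup all_algebra.
From mathcomp Require Import zify ring lra.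
Set Implicit Arguments. Unset Strict Implicit. Unset Printing Implicit Defensive.
Import Order.TTheory GRing.Theory Num.Theory.
Local Open Scope ring_scope.

Lemma aux n (C : 'I_n -> 'I_n -> bool) j :
  \sum_i \sum_(k | C i k) (((j == i)%:R : rat) - (j == k)%:R)
  = \sum_(k | C j k) 1 - \sum_(i | C i j) 1.
Proof.
under eq_bigr => i _ do rewrite sumrB.
rewrite sumrB; congr (_ - _).
  rewrite (bigD1 j) //= [X in _ + X]big1 ?addr0; last first.
    by move=> i /negbTE Hi; apply: big1 => k _; rewrite eq_sym Hi.
  by apply: eq_bigr => k _; rewrite eqxx.
under eq_bigr => i _ do rewrite big_mkcond.
rewrite exchange_big (bigD1 j) //= [X in _ + X]big1 ?addr0; last first.
  by move=> k /negbTE Hk; apply: big1 => i _; rewrite eq_sym Hk if_same.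
rewrite [RHS]big_mkcond; apply: eq_bigr => i _; rewrite eqxx; by case: ifP.
Qed.

Section H.
Variables (I : finType) (d : I -> nat).
Notation TT := (Tagged (fun b => 'I_(d b))).

Lemma TT_same a (i j : 'I_(d a)) : (TT i == TT j) = (i == j).
Proof. by rewrite eq_Tagged. Qed.

Lemma TT_diff a c (i : 'I_(d a)) (j : 'I_(d c)) : a != c -> (TT i == TT j) = false.
Proof. by move=> H; apply/negbTE/negP => /eq_tag /= E; rewrite E eqxx in H. Qed.

Lemma beta_same a (i j : 'I_(d a)) : beta i (TT j) = (j == i)%:R.
Proof. by rewrite ffunE TT_same. Qed.

Lemma beta_diff a c (i : 'I_(d a)) (j : 'I_(d c)) : c != a -> beta i (TT j) = 0.
Proof. by move=> H; rewrite ffunE TT_diff. Qed.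

Lemma pairing_beta (l : wt d) a (i : 'I_(d a)) : pairing l (beta i) = l (TT i).
Proof.
rewrite /pairing (bigD1 (TT i)) //= ffunE eqxx mulr1 big1 ?addr0 // => k /negbTE Hk.
by rewrite ffunE Hk mulr0.
Qed.

Lemma pairingB (l m1 m2 : wt d) : pairing l (m1 - m2) = pairing l m1 - pairing l m2.
Proof. by rewrite /pairing -sumrB; apply: eq_bigr => k _; rewrite !ffunE mulrBr. Qed.

Lemma wact_beta (w : weyl d) a (i : 'I_(d a)) : wact w (beta i) = beta (w a i).
Proof.
apply/ffunP => -[c j]; rewrite !ffunE /=; move: j.
case: (eqVneq a c) => [<-|H] j; first by rewrite !TT_same -(inj_eq (@perm_inj _ (w a))) permKV eq_sym.
rewrite !TT_diff //; by rewrite eq_sym.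
Qed.

Lemma wactB (w : weyl d) (m1 m2 : wt d) : wact w (m1 - m2) = wact w m1 - wact w m2.
Proof. by apply/ffunP => k; rewrite !ffunE. Qed.

Lemma sum_wtE (J : Type) (r : seq J) (Q : pred J) (F : J -> wt d) (k : {x : I & 'I_(d x)}) :
  (\sum_(i <- r | Q i) F i) k = \sum_(i <- r | Q i) F i k.
Proof. by elim/big_rec2: _ => [|i x y _ <-]; rewrite ffunE. Qed.

Lemma sum_wtT (J : Type) (r : seq J) (F : J -> wt d) (k : {x : I & 'I_(d x)}) :
  (\sum_(i <- r) F i) k = \sum_(i <- r) F i k.
Proof. by elim/big_rec2: _ => [|i x y _ <-]; rewrite ffunE. Qed.

Lemma rho_subE (P : wt d -> bool) a (j : 'I_(d a)) :
  rho_sub P (TT j) = 2^-1 * ((\sum_(j' : 'I_(d a) | (j < j')%N && P (beta j - beta j')) 1)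
                            - (\sum_(i : 'I_(d a) | (i < j)%N && P (beta i - beta j)) 1)).
Proof.
rewrite ffunE.
transitivity (2^-1 * \sum_(c : I) \sum_(i : 'I_(d c))
   \sum_(k' : 'I_(d c) | (i < k')%N && P (beta i - beta k')) (beta i (TT j) - beta k' (TT j))).
  congr (_ * _); apply: etrans; first exact: sum_wtT. apply: eq_bigr => c _.
  apply: etrans; first exact: sum_wtT. apply: eq_bigr => i _.
  apply: etrans; first exact: sum_wtE. apply: eq_bigr => k _; by rewrite !ffunE.
rewrite (bigD1 a) //= [X in _ + X]big1 ?addr0; last first.
  move=> c Hc; rewrite big1 // => i _; rewrite big1 // => k _.
  by rewrite !beta_diff 1?eq_sym // subrr.
congr (_ * _).
under eq_bigr => i _ do (under eq_bigr => k _ do rewrite !beta_same).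
exact: (aux (fun i k => (i < k)%N && P (beta i - beta k))).
Qed.

End H.

Lemma cnt n lo hi : (lo <= hi)%N -> (\sum_(i < n | (lo <= i)%N && (i < hi)%N) 1 = minn hi n - minn lo n)%N.
Proof.
elim: n => [|n IH] H; first by rewrite big_ord0; lia.
rewrite big_mkcond big_ord_recr /= -big_mkcond IH //.
case: ifP => /= h; [move/andP: h => [h1 h2]| ]; try lia.
Qed.

Lemma word_val e f n (H : (e + f)%N = n) (i : 'I_n) : nat_of_ord (wperm H i) = wfun e f i.
Proof. by subst n; rewrite permE /word val_insubd wfun_lt. Qed.

Lemma wperm_inv e f n (H : (e + f)%N = n) (j : 'I_n) : nat_of_ord ((wperm H)^-1%g j) = wfun f e j.
Proof.
have E := permKV (wperm H) j; move/(congr1 (@nat_of_ord n)): E; rewrite word_val.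
have := ltn_ord ((wperm H)^-1%g j); have := ltn_ord j.
move: ((wperm H)^-1%g j) => i; rewrite /wfun => Hj Hi E.
move: E; case: (ltnP i e) => h1; case: (ltnP j f) => h2; lia.
Qed.

Lemma cntR n (C : pred 'I_n) lo hi : (lo <= hi)%N -> (forall i : 'I_n, C i = (lo <= i)%N && (i < hi)%N) ->
  \sum_(i | C i) (1 : rat) = (minn hi n - minn lo n)%:R.
Proof.
move=> H E; rewrite -cnt // natr_sum; apply: eq_big => // i; by rewrite E.
Qed.

Lemma lt_if (x y : rat) b1 b2 : x < y -> ((if b1 then x else y) - (if b2 then x else y) < 0) = b1 && ~~ b2.
Proof.
move=> H; case: b1; case: b2 => /=; rewrite ?subrr ?ltxx // subr_lt0 //.
by apply/negbTE; rewrite -leNgt ltW.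
Qed.

Section A.
Variables (I : finType) (d : I -> nat).
Notation TT := (Tagged (fun b => 'I_(d b))).

Lemma rhoE a (i : 'I_(d a)) : rho d (TT i) = 2^-1 * ((d a - i.+1)%:R - i%:R).
Proof.
rewrite /rho rho_subE (cntR (lo := i.+1) (hi := d a)) ?ltn_ord //; last by move=> k /=; rewrite andbT ltn_ord andbT.
rewrite (cntR (lo := 0) (hi := i)) //; last by move=> k /=; rewrite andbT.
congr (_ * (_%:R - _%:R)); have := ltn_ord i; lia.
Qed.

Lemma rho_lamE (f : I -> nat) x y a (i : 'I_(d a)) : x < y -> (f a <= d a)%N ->
  rho_lam (cochar d f x y) (TT i) =
  2^-1 * ((if (i < f a)%N then (d a - f a)%N else 0%N)%:R - (if (i < f a)%N then 0%N else f a)%:R).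
Proof.
move=> Hxy Hf.
rewrite /rho_lam rho_subE.
rewrite (cntR (lo := f a) (hi := if (i < f a)%N then d a else f a)); last first.
- move=> k /=; rewrite pairingB !pairing_beta !ffunE /= lt_if //.
  have := ltn_ord k; have := ltn_ord i; move=> Hk Hi; case: (ltnP i (f a)) => h1; case: (ltnP k (f a)) => h2 /=; lia.
- by case: ifP.
rewrite (cntR (lo := 0) (hi := if (i < f a)%N then 0 else f a)); last first.
- move=> k /=; rewrite pairingB !pairing_beta !ffunE /= lt_if //.
  have := ltn_ord k; have := ltn_ord i; move=> Hk Hi; case: (ltnP i (f a)) => h1; case: (ltnP k (f a)) => h2 /=; lia.
- by [].
congr (_ * (_%:R - _%:R)); case: ifP => ?; lia.
Qed.
End A.

Lemma wtB (I : finType) (d : I -> nat) (m1 m2 : wt d) k : (m1 - m2) k = m1 k - m2 k.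
Proof. by rewrite !ffunE. Qed.

Lemma wactE (I : finType) (d : I -> nat) (w : weyl d) (m : wt d) a (j : 'I_(d a)) :
  wact w m (Tagged (fun b => 'I_(d b)) j) = m (Tagged (fun b => 'I_(d b)) ((w a)^-1%g j)).
Proof. by rewrite ffunE. Qed.

Lemma partA (I : finType) (e f : I -> nat) (x2 y2 : rat) : x2 < y2 ->
  wact (w_ef e f) (rho (dsum e f)) - rho (dsum e f)
    = [ffun k => - 2 * rho_lam (cochar (dsum e f) f x2 y2) k].
Proof.
move=> Hxy; apply/ffunP => -[a j].
change (existT _ a j) with (Tagged (fun b => 'I_(dsum e f b)) j).
rewrite wtB wactE [RHS]ffunE rho_lamE //; last by rewrite /dsum leq_addl.
rewrite !rhoE /w_ef wperm_inv.
have := ltn_ord j; rewrite /dsum /wfun => Hj.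
case: (ltnP j (f a)) => h; rewrite ?natrB ?natrD //; try lia.
- have E1 : ((j + e a).+1%:R : rat) = j%:R + (e a)%:R + 1 by rewrite -natr1 natrD.
  have E2 : (j.+1%:R : rat) = j%:R + 1 by rewrite -natr1.
  lra.
- apply: (@leq_trans (f a + e a)); first by rewrite ltn_add2r. by rewrite addnC.
- have E1 : ((j - f a).+1%:R : rat) = j%:R - (f a)%:R + 1 by rewrite -(@natr1 rat (j - f a)%N) (natrB _ h).
  have E2 : (j.+1%:R : rat) = j%:R + 1 by rewrite -natr1.
  lra.
Qed.
Lemma sym_sum (I Ar : finType) (s t : Ar -> I) (F : I -> I -> nat) : symmetric_quiver s t ->
  \sum_a F (s a) (t a) = \sum_a F (t a) (s a).
Proof.
move=> Hs.
have E : forall G : Ar -> nat, \sum_a G a = \sum_i \sum_j \sum_(a | (s a == i) && (t a == j)) G a.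
  move=> G; rewrite (partition_big s predT) //; apply: eq_bigr => i _.
  rewrite (partition_big t predT) //; apply: eq_bigr => j _; by apply: eq_bigl => a.
rewrite !E [RHS]exchange_big; apply: eq_bigr => i _; apply: eq_bigr => j _.
have -> : \sum_(a | (s a == i) && (t a == j)) F (s a) (t a) = \sum_(a | (s a == i) && (t a == j)) F i j.
  by apply: eq_bigr => a /andP[/eqP-> /eqP->].
have -> : \sum_(a | (s a == j) && (t a == i)) F (t a) (s a) = \sum_(a | (s a == j) && (t a == i)) F i j.
  by apply: eq_bigr => a /andP[/eqP-> /eqP->].
rewrite !sum_nat_cond_const !cardsE; congr (_ * _).
exact: Hs.
Qed.

Lemma count_allpairs (S T R : Type) (F : S -> T -> R) s t (r : pred R) :
  count r [seq F x y | x <- s, y <- t] = \sum_(x <- s) \sum_(y <- t | r (F x y)) 1.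
Proof.
elim: s => [|x s IH]; rewrite ?big_nil //= big_cons count_cat IH count_map -sum1_count //.
Qed.

Lemma ie (T : finType) : Finite.enum T = index_enum T.
Proof. by []. Qed.

Lemma wfe_val (I : finType) (e f : I -> nat) a (x : 'I_(dsum e f a)) :
  nat_of_ord (w_fe e f a x) = wfun (f a) (e a) x.
Proof. exact: word_val. Qed.

Lemma partB (I Ar : finType) (s t : Ar -> I) (e f : I -> nat) (x1 y1 x2 y2 : rat) :
  symmetric_quiver s t -> x1 < y1 -> x2 < y2 ->
  perm_eq [seq - wact (w_fe e f) b | b <- weights_lam s t (cochar (dsum e f) f x2 y2)]
             (weights_lam s t (cochar (dsum e f) e x1 y1)).
Proof.
move=> Hs H1 H2; apply/seq.permP => q.
rewrite count_map /weights_lam !count_filter /weights !count_flatten !sumnE !big_map.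
pose H := fun i j => (\sum_(u : 'I_(dsum e f i)) \sum_(v : 'I_(dsum e f j) |
   [&& (u < e i)%N, ~~ (v < e j)%N & q (beta u - beta v)%R]) 1)%N.
have C1 : forall a, count (predI (preim (fun b : wt (dsum e f) => - wact (w_fe e f) b) q)
           (fun b : wt (dsum e f) => (pairing (cochar (dsum e f) f x2 y2) b < 0)%R))
        [seq (beta y - beta x)%R | x <- enum 'I_(dsum e f (s a)), y <- enum 'I_(dsum e f (t a))]
        = H (s a) (t a).
  move=> a; rewrite count_allpairs !enumT !ie /H.
  rewrite [RHS](reindex_inj (@perm_inj _ (w_fe e f (s a)))); apply: eq_bigr => x _.
  rewrite [RHS](reindex_inj (@perm_inj _ (w_fe e f (t a)))); apply: eq_bigl => y.
  rewrite /= pairingB !pairing_beta !ffunE /= lt_if // wactB !wact_beta opprB !wfe_val /wfun.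
  have hx : (x < e (s a) + f (s a))%N := ltn_ord x.
  have hy : (y < e (t a) + f (t a))%N := ltn_ord y.
  by case: (ltnP x (f (s a))) => h1; case: (ltnP y (f (t a))) => h2 /=; case: (q _); lia.
have C2 : forall a, count (predI q
           (fun b : wt (dsum e f) => (pairing (cochar (dsum e f) e x1 y1) b < 0)%R))
        [seq (beta y - beta x)%R | x <- enum 'I_(dsum e f (s a)), y <- enum 'I_(dsum e f (t a))]
        = H (t a) (s a).
  move=> a; rewrite count_allpairs !enumT !ie /H.
  under eq_bigr => x _ do rewrite big_mkcond.
  rewrite exchange_big; apply: eq_bigr => y _; rewrite [RHS]big_mkcond; apply: eq_bigr => x _.
  rewrite /= pairingB !pairing_beta !ffunE /= lt_if //.
  by case: (q _); case: (y < e (t a))%N; case: (x < e (s a))%N.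
transitivity (\sum_(j <- Finite.enum Ar) H (s j) (t j))%N.
  by apply: eq_bigr => a _; exact: C1.
transitivity (\sum_(j <- Finite.enum Ar) H (t j) (s j))%N.
  exact: sym_sum.
by apply: eq_bigr => a _; symmetry; exact: C2.
Qed.

Theorem proposition4p4 (I Ar : finType) (s t : Ar -> I) (e f : I -> nat)
    (x1 y1 x2 y2 : rat) :
  symmetric_quiver s t ->
  x1 < y1 -> in_SG (cochar (dsum e f) e x1 y1) ->
  x2 < y2 -> in_SG (cochar (dsum e f) f x2 y2) ->
  wact (w_ef e f) (rho (dsum e f)) - rho (dsum e f)
    = [ffun k => - 2 * rho_lam (cochar (dsum e f) f x2 y2) k]
  /\ perm_eq [seq - wact (w_fe e f) b | b <- weights_lam s t (cochar (dsum e f) f x2 y2)]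
             (weights_lam s t (cochar (dsum e f) e x1 y1)).
Proof.
move=> Hs H1 _ H2 _; split; first exact: partA.
exact: partB.
Qed.
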